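(* Let $p\ge 1$ and $n\ge p$ be integers. Then $$S_{n,s}\cap S_{n+1,s}=\varnothing\qquad\text{and}\qquad S_{n,s}\cap S_{n+2,s}=\varnothing .$$ That is, no real number $\Lambda$ is simultaneously an eigenvalue of order $n$ with an even eigenfunction and an eigenvalue of order $m$ with an even eigenfunction, when $m=n+1$ or $m=n+2$.
   Context: Fix an integer $p\ge 1$. For an integer $k\ge p$ and a real number $\Lambda$, define the differential operator on $[-1,1]$ $$L^{2k}(\Lambda)=(-1)^k\frac{d^{2k}}{dx^{2k}}-\Lambda(-1)^{k-p}\frac{d^{2k-2p}}{dx^{2k-2p}}.$$ A real number $\Lambda$ is an eigenvalue of order $k$ if there is a real function $z\in C^{2k}[-1,1]$, $z\not\equiv 0$, such that - $L^{2k}(\Lambda)z=0$ on $[-1,1]$, and - $z^{(j)}(-1)=z^{(j)}(1)=0$ for $j=0,\dots,k-1$. Such a $z$ is called an eigenfunction of order $k$ with eigenvalue $\Lambda$. These eigenvalues and eigenfunctions are exactly the critical values and critical points of the Rayleigh quotient $$\Phi_k(u)=\frac{\int_{-1}^1 (u^{(k)})^2\,dx}{\int_{-1}^1 (u^{(k-p)})^2\,dx}$$ on $\mathring W_2^k(-1,1)$. Here $\mathring W_2^k(-1,1)$ denotes the functions $u\in C^{k-1}[-1,1]$ with $u^{(j)}(\pm1)=0$ for $j<k$ and $u^{(k)}\in L_2$. Let $S_{k,s}$ (resp. $S_{k,a}$) denote the set of eigenvalues of order $k$ that admit an even (resp. odd) eigenfunction of order $k$. *)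

(* Defs.v *)
From Stdlib Require Import Reals Lra Lia.
Open Scope R_scope.

(* Functions are taken
   on all of R. *)
Definition deriv_family (z : R -> R) (m : nat) (D : nat -> R -> R) : Prop :=
  (forall x, D 0%nat x = z x) /\
  (forall (j : nat) (x : R), (j < m)%nat -> derivable_pt_lim (D j) x (D (S j) x)) /\
  (forall x, -1 <= x <= 1 -> continuity_pt (D m) x).

Definition eigenfunction (p k : nat) (Lam : R) (z : R -> R) : Prop :=
  exists D : nat -> R -> R,
    deriv_family z (2 * k) D /\
    (exists x, -1 <= x <= 1 /\ z x <> 0) /\
    (forall x, -1 <= x <= 1 ->
        (-1) ^ k * D (2 * k)%nat x
        - Lam * (-1) ^ (k - p) * D (2 * k - 2 * p)%nat x = 0) /\
    (forall j : nat, (j < k)%nat -> D j (-1) = 0 /\ D j 1 = 0).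

Definition S_sym (p k : nat) (Lam : R) : Prop :=
  exists z : R -> R, eigenfunction p k Lam z /\
    (forall x, -1 <= x <= 1 -> z (- x) = z x).

(* Main.v *)
Require Import Defs.
From Stdlib Require Import Reals.
From Coquelicot Require Import Coquelicot.
From Stdlib Require Import Reals Lra Lia Classical.
Open Scope R_scope.

Definition inI (x : R) := -1 <= x <= 1.
Definition cont (f : R -> R) := forall x, inI x -> continuity_pt f x.
Definition Int (f : R -> R) : R := RInt f (-1) 1.

Lemma cont_ex f : cont f -> ex_RInt f (-1) 1.
Proof.
  intros H; apply (ex_RInt_continuous (V:=R_CompleteNormedModule)); intros z Hz.
  rewrite Rmin_left in Hz by lra; rewrite Rmax_right in Hz by lra.
  apply continuity_pt_filterlim, H; exact Hz.
Qed.

Lemma cont_plus f g : cont f -> cont g -> cont (fun x => f x + g x).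
Proof. intros Hf Hg x Hx; apply (continuity_pt_plus f g); auto. Qed.
Lemma cont_mult f g : cont f -> cont g -> cont (fun x => f x * g x).
Proof. intros Hf Hg x Hx; apply (continuity_pt_mult f g); auto. Qed.
Lemma cont_const c : cont (fun _ => c).
Proof. intros x _; apply continuity_pt_const; intros a b; reflexivity. Qed.
Lemma cont_scal c f : cont f -> cont (fun x => c * f x).
Proof. intros; apply cont_mult; auto using cont_const. Qed.

Lemma Int_plus f g : cont f -> cont g -> Int (fun x => f x + g x) = Int f + Int g.
Proof.
  intros Hf Hg; unfold Int.
  exact (RInt_plus f g (-1) 1 (cont_ex f Hf) (cont_ex g Hg)).
Qed.
Lemma Int_scal c f : cont f -> Int (fun x => c * f x) = c * Int f.
Proof.
  intros Hf; unfold Int.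
  exact (RInt_scal f (-1) 1 c (cont_ex f Hf)).
Qed.
Lemma Int_ext f g : (forall x, inI x -> f x = g x) -> Int f = Int g.
Proof.
  intros H; unfold Int; apply RInt_ext; intros x Hx.
  rewrite Rmin_left in Hx by lra; rewrite Rmax_right in Hx by lra.
  apply H; unfold inI; lra.
Qed.
Lemma Int_ge0 f : cont f -> (forall x, inI x -> 0 <= f x) -> 0 <= Int f.
Proof.
  intros Hf H; unfold Int; apply RInt_ge_0; [lra| apply cont_ex; auto|].
  intros x Hx; apply H; unfold inI; lra.
Qed.
Lemma Int_zero : Int (fun _ => 0) = 0.
Proof. unfold Int; rewrite RInt_const; simpl. unfold scal; simpl; unfold mult; simpl; ring. Qed.

Lemma Int_pos f x0 : cont f -> (forall x, inI x -> 0 <= f x) -> inI x0 -> 0 < f x0 -> 0 < Int f.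
Proof.
  intros Hf H Hx0 Hp.
  assert (Hc := Hf x0 Hx0).
  destruct (Hc (f x0 / 2)) as [d [Hd Hdd]]; [lra|].
  set (c := Rmax (-1) (x0 - d/2)). set (e := Rmin 1 (x0 + d/2)).
  assert (Hc1 : -1 <= c) by (unfold c; apply Rmax_l).
  assert (He1 : e <= 1) by (unfold e; apply Rmin_l).
  assert (Hce : c < e).
  { unfold c, e, inI in *. unfold Rmax, Rmin; repeat destruct Rle_dec; lra. }
  assert (Hcx : x0 - d/2 <= c) by (unfold c; apply Rmax_r).
  assert (Hex : e <= x0 + d/2) by (unfold e; apply Rmin_r).
  assert (Hc0 : c <= x0) by (unfold c, inI in *; unfold Rmax; destruct Rle_dec; lra).
  assert (He0 : x0 <= e) by (unfold e, inI in *; unfold Rmin; destruct Rle_dec; lra).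
  assert (Hexf : forall a b, -1 <= a -> a <= b -> b <= 1 -> ex_RInt f a b).
  { intros a b Ha Hab Hb; apply (ex_RInt_continuous (V:=R_CompleteNormedModule)); intros z Hz.
    rewrite Rmin_left in Hz by lra; rewrite Rmax_right in Hz by lra.
    apply continuity_pt_filterlim, Hf; unfold inI; lra. }
  unfold Int.
  rewrite <- (RInt_Chasles f (-1) c 1) by (apply Hexf; lra).
  rewrite <- (RInt_Chasles f c e 1) by (apply Hexf; lra).
  assert (0 <= RInt f (-1) c).
  { apply RInt_ge_0; [lra| apply Hexf; lra|]. intros; apply H; unfold inI; lra. }
  assert (0 <= RInt f e 1).
  { apply RInt_ge_0; [lra| apply Hexf; lra|]. intros; apply H; unfold inI; lra. }
  assert (0 < RInt f c e).
  { apply RInt_gt_0; [lra| |].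
    - intros x Hx.
      destruct (Req_dec x x0) as [->|Hne]; [lra|].
      assert (Hd2 : R_dist x x0 < d).
      { unfold R_dist; apply Rabs_def1; lra. }
      specialize (Hdd x (conj (conj I (not_eq_sym Hne)) Hd2)).
      simpl in Hdd; unfold R_dist in Hdd.
      apply Rabs_def2 in Hdd; lra.
    - intros z Hz; apply continuity_pt_filterlim, Hf; unfold inI; lra. }
  unfold plus; simpl; lra.
Qed.

Lemma Int_zero_inv f : cont f -> (forall x, inI x -> 0 <= f x) -> Int f = 0 -> forall x, inI x -> f x = 0.
Proof.
  intros Hf H H0 x Hx. destruct (H x Hx) as [Hlt|Heq]; [|auto].
  exfalso; pose proof (Int_pos f x Hf H Hx Hlt); lra.
Qed.

Lemma deriv_zero_on_I h x l : (forall y, inI y -> h y = 0) -> inI x -> derivable_pt_lim h x l -> l = 0.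
Proof.
  intros H0 Hx Hd. destruct (Req_dec l 0) as [|Hl]; [auto|exfalso].
  destruct (Hd (Rabs l)) as [d Hdd]; [apply Rabs_pos_lt; auto|].
  unfold inI in Hx.
  destruct (Rlt_or_le x 1) as [Hx1|Hx1].
  - set (h0 := Rmin (d/2) ((1-x)/2)).
    assert (h0 > 0) by (unfold h0; apply Rmin_glb_lt; pose proof (cond_pos d); lra).
    assert (h0 <= d/2) by apply Rmin_l. assert (h0 <= (1-x)/2) by apply Rmin_r.
    specialize (Hdd h0 ltac:(lra)).
    rewrite Rabs_right in Hdd by lra. specialize (Hdd ltac:(pose proof (cond_pos d); lra)).
    rewrite !H0 in Hdd by (unfold inI; lra).
    replace ((0 - 0) / h0 - l) with (- l) in Hdd by (field; lra).
    rewrite Rabs_Ropp in Hdd; lra.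
  - set (h0 := - Rmin (d/2) 1).
    assert (Rmin (d/2) 1 > 0) by (apply Rmin_glb_lt; pose proof (cond_pos d); lra).
    assert (Rmin (d/2) 1 <= d/2) by apply Rmin_l. assert (Rmin (d/2) 1 <= 1) by apply Rmin_r.
    specialize (Hdd h0 ltac:(unfold h0; lra)).
    unfold h0 in Hdd; rewrite Rabs_Ropp, Rabs_right in Hdd by lra.
    specialize (Hdd ltac:(pose proof (cond_pos d); lra)).
    rewrite !H0 in Hdd by (unfold inI; lra).
    replace ((0 - 0) / - Rmin (d/2) 1 - l) with (- l) in Hdd by (field; lra).
    rewrite Rabs_Ropp in Hdd; lra.
Qed.

Lemma deriv_unique_I f g x l1 l2 : (forall y, inI y -> f y = g y) -> inI x ->
  derivable_pt_lim f x l1 -> derivable_pt_lim g x l2 -> l1 = l2.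
Proof.
  intros H Hx H1 H2.
  assert (Hd : derivable_pt_lim (fun y => f y - g y) x (l1 - l2)).
  { apply (derivable_pt_lim_minus f g); auto. }
  apply deriv_zero_on_I in Hd; [lra| |auto].
  intros y Hy; rewrite H; auto; ring.
Qed.

Lemma deriv_lim_eq f x l l' : derivable_pt_lim f x l -> l = l' -> derivable_pt_lim f x l'.
Proof. intros; subst; auto. Qed.

Lemma deriv0_const f : (forall y, inI y -> derivable_pt_lim f y 0) -> forall x, inI x -> f x = f (-1).
Proof.
  intros H x Hx. unfold inI in Hx.
  assert (Hi : is_RInt (fun _ => 0) (-1) x (minus (f x) (f (-1)))).
  { apply (is_RInt_derive f (fun _ => 0)).
    - intros y Hy. rewrite Rmin_left in Hy by lra; rewrite Rmax_right in Hy by lra.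
      apply is_derive_Reals, H; unfold inI; lra.
    - intros y _; apply continuous_const. }
  apply (is_RInt_unique (V:=R_CompleteNormedModule)) in Hi. rewrite RInt_const in Hi.
  unfold scal, minus, plus, opp in Hi; simpl in Hi; unfold mult in Hi; simpl in Hi. lra.
Qed.

Lemma IBP u u' v v' :
  (forall x, inI x -> derivable_pt_lim u x (u' x)) ->
  (forall x, inI x -> derivable_pt_lim v x (v' x)) ->
  cont u' -> cont v' ->
  Int (fun x => u' x * v x) = (u 1 * v 1 - u (-1) * v (-1)) - Int (fun x => u x * v' x).
Proof.
  intros Hu Hv Hu' Hv'.
  assert (Cu : cont u) by (intros x Hx; eapply derivable_continuous_pt; exists (u' x); apply Hu; auto).
  assert (Cv : cont v) by (intros x Hx; eapply derivable_continuous_pt; exists (v' x); apply Hv; auto).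
  assert (Hi : is_RInt (fun x => u' x * v x + u x * v' x) (-1) 1 (minus (u 1 * v 1) (u (-1) * v (-1)))).
  { apply (is_RInt_derive (fun x => u x * v x)).
    - intros y Hy. rewrite Rmin_left in Hy by lra; rewrite Rmax_right in Hy by lra.
      apply is_derive_Reals. apply (derivable_pt_lim_mult u v); [apply Hu|apply Hv]; unfold inI; lra.
    - intros y Hy. rewrite Rmin_left in Hy by lra; rewrite Rmax_right in Hy by lra.
      apply continuity_pt_filterlim. apply cont_plus; try apply cont_mult; auto; unfold inI; lra. }
  apply (is_RInt_unique (V:=R_CompleteNormedModule)) in Hi. fold (Int (fun x => u' x * v x + u x * v' x)) in Hi.
  rewrite Int_plus in Hi by (apply cont_mult; auto).
  unfold minus, plus, opp in Hi; simpl in Hi. lra.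
Qed.

Lemma CS u v : cont u -> cont v -> 0 < Int (fun x => v x * v x) ->
  Int (fun x => u x * v x) ^ 2 <= Int (fun x => u x * u x) * Int (fun x => v x * v x).
Proof.
  intros Cu Cv Hp.
  set (A := Int (fun x => u x * u x)). set (B := Int (fun x => u x * v x)). set (C := Int (fun x => v x * v x)).
  set (t := - B / C).
  assert (H : 0 <= Int (fun x => (u x + t * v x) * (u x + t * v x))).
  { apply Int_ge0. apply cont_mult; apply cont_plus; auto; apply cont_scal; auto.
    intros; apply Rle_0_sqr. }
  assert (E : Int (fun x => (u x + t * v x) * (u x + t * v x)) = A + 2 * t * B + t * t * C).
  { rewrite (Int_ext _ (fun x => (u x * u x + (2 * t) * (u x * v x)) + (t * t) * (v x * v x)))
      by (intros; ring).
    rewrite Int_plus, Int_plus, Int_scal, Int_scal; auto;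
      repeat first [apply cont_plus | apply cont_scal | apply cont_mult]; auto. }
  rewrite E in H. unfold t in H.
  assert (0 <= A - B * B / C).
  { replace (A - B*B/C) with (A + 2 * (-B/C) * B + (-B/C)*(-B/C)*C). exact H. field; unfold C; lra. }
  assert (0 <= A * C - B * B).
  { replace (A*C - B*B) with ((A - B*B/C) * C) by (field; unfold C; lra). apply Rmult_le_pos; [lra|unfold C; lra]. }
  simpl; lra.
Qed.

Definition fam (D : nat -> R -> R) (M : nat) :=
  (forall j x, (j < M)%nat -> inI x -> derivable_pt_lim (D j) x (D (S j) x)) /\ cont (D M).

Lemma fam_cont D M j : fam D M -> (j <= M)%nat -> cont (D j).
Proof.
  intros [Hd Hc] Hj. destruct (Nat.eq_dec j M) as [->|Hne]; auto.
  intros x Hx. apply derivable_continuous_pt. exists (D (S j) x). apply Hd; auto; lia.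
Qed.

Lemma fam_le D M M' : fam D M -> (M' <= M)%nat -> fam D M'.
Proof.
  intros HF Hle. split.
  - intros j x Hj Hx; apply (proj1 HF); auto; lia.
  - apply (fam_cont D M); auto.
Qed.

Definition SS (F G : nat -> R -> R) (a b : nat) : R := Int (fun x => F a x * G b x).
Definition Bd (F G : nat -> R -> R) (a b : nat) : R := F a 1 * G b 1 - F a (-1) * G b (-1).

Lemma step F G MF MG a b : fam F MF -> fam G MG -> (a + 1 <= MF)%nat -> (b + 1 <= MG)%nat ->
  SS F G (S a) b = Bd F G a b - SS F G a (S b).
Proof.
  intros HF HG Ha Hb. unfold SS, Bd.
  apply IBP.
  - intros; apply (proj1 HF); auto; lia.
  - intros; apply (proj1 HG); auto; lia.
  - apply (fam_cont F MF); auto; lia.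
  - apply (fam_cont G MG); auto; lia.
Qed.

Lemma chain F G MF MG : fam F MF -> fam G MG -> forall j a b,
  (a + j <= MF)%nat -> (b + j <= MG)%nat ->
  (forall i, (i < j)%nat -> Bd F G (a + i) (b + j - 1 - i) = 0) ->
  SS F G (a + j) b = (-1) ^ j * SS F G a (b + j).
Proof.
  intros HF HG j. induction j as [|j IH]; intros a b Ha Hb Hbd.
  - rewrite !Nat.add_0_r; simpl; ring.
  - replace (a + S j)%nat with (S a + j)%nat by lia.
    rewrite IH; try lia.
    + rewrite (step F G MF MG a (b + j)); try lia; auto.
      specialize (Hbd 0%nat ltac:(lia)).
      replace (a + 0)%nat with a in Hbd by lia. replace (b + S j - 1 - 0)%nat with (b + j)%nat in Hbd by lia.
      rewrite Hbd. replace (S (b + j)) with (b + S j)%nat by lia. simpl; ring.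
    + intros i Hi. specialize (Hbd (S i) ltac:(lia)).
      replace (a + S i)%nat with (S a + i)%nat in Hbd by lia.
      replace (b + S j - 1 - S i)%nat with (b + j - 1 - i)%nat in Hbd by lia. exact Hbd.
Qed.

Lemma SS_comm D a b : SS D D a b = SS D D b a.
Proof. unfold SS; apply Int_ext; intros; ring. Qed.

Lemma descent D M : fam D M -> forall k, (k <= M)%nat -> (forall x, inI x -> D k x = 0) ->
  (forall j, (j < k)%nat -> D j (-1) = 0) -> forall x, inI x -> D 0%nat x = 0.
Proof.
  intros HF k. induction k as [|k IH]; intros Hk H0 Hv x Hx; auto.
  apply IH; try lia; auto.
  intros y Hy. rewrite (deriv0_const (D k)); auto.
  intros z Hz. apply (deriv_lim_eq _ _ (D (S k) z)); auto.
  apply (proj1 HF); auto; lia.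
Qed.

Lemma fam_lin F G c M : fam F M -> fam G M -> fam (fun j x => F j x + c * G j x) M.
Proof.
  intros [HF1 HF2] [HG1 HG2]; split.
  - intros j x Hj Hx. apply (derivable_pt_lim_plus (F j) (fun x => c * G j x)); auto.
    apply (derivable_pt_lim_scal (G j) c); auto.
  - apply cont_plus; auto; apply cont_scal; auto.
Qed.

Lemma fam_shift2 G M : fam G (M + 2) -> fam (fun j => G (S (S j))) M.
Proof.
  intros [H1 H2]; split.
  - intros j x Hj Hx; apply H1; auto; lia.
  - replace (S (S M)) with (M + 2)%nat by lia; auto.
Qed.

Lemma fam_zero_prop D M : fam D M -> (forall x, inI x -> D 0%nat x = 0) -> forall j, (j <= M)%nat -> forall x, inI x -> D j x = 0.
Proof.
  intros HF H0 j. induction j as [|j IH]; intros Hj x Hx; auto.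
  apply (deriv_zero_on_I (D j) x); auto. intros; apply IH; auto; lia.
  apply (proj1 HF); auto; lia.
Qed.

Section L.
Variables (D : nat -> R -> R) (M V : nat).
Hypothesis HF : fam D M.
Hypothesis HV : forall j, (j < V)%nat -> D j 1 = 0 /\ D j (-1) = 0.

Definition aa k := SS D D k k.

Lemma Bd_van a b : (b < V)%nat -> Bd D D a b = 0.
Proof. intros Hb; unfold Bd; destruct (HV b Hb) as [-> ->]; ring. Qed.

Lemma I0 q : (2 * q <= M)%nat -> (q <= V)%nat -> SS D D (2 * q) 0 = (-1) ^ q * aa q.
Proof.
  intros H1 H2. replace (2 * q)%nat with (q + q)%nat by lia.
  rewrite (chain D D M M HF HF q q 0); try lia.
  - reflexivity.
  - intros i Hi; apply Bd_van; lia.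
Qed.

Lemma I2 q : (2 * q <= M)%nat -> (q + 1 <= M)%nat -> (q + 1 <= V)%nat -> (2 <= M)%nat ->
  SS D D (2 * q) 2 = (-1) ^ (q + 1) * aa (q + 1).
Proof.
  intros H1 H2 H3 H4. destruct q as [|q].
  - replace (2 * 0)%nat with 0%nat by lia. rewrite (SS_comm D 0 2).
    replace 2%nat with (1 + 1)%nat by lia.
    rewrite (chain D D M M HF HF 1 1 0); try lia.
    + unfold aa. simpl; ring.
    + intros i Hi; apply Bd_van; lia.
  - replace (2 * S q)%nat with (S (S q) + q)%nat by lia.
    rewrite (chain D D M M HF HF q (S (S q)) 2); try lia.
    + replace (2 + q)%nat with (S q + 1)%nat by lia. unfold aa.
      replace (S (S q)) with (S q + 1)%nat by lia.
      rewrite !pow_add. simpl. ring.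
    + intros i Hi; apply Bd_van; lia.
Qed.

Lemma Im1 k : (1 <= k)%nat -> (k + 1 <= M)%nat -> (k <= V)%nat ->
  SS D D (k + 1) (k - 1) = - aa k.
Proof.
  intros H1 H2 H3.
  rewrite (chain D D M M HF HF 1 k (k - 1)); try lia.
  - replace (k - 1 + 1)%nat with k by lia. unfold aa; simpl; ring.
  - intros i Hi; apply Bd_van; lia.
Qed.

Lemma aa_ge0 k : (k <= M)%nat -> 0 <= aa k.
Proof.
  intros Hk; unfold aa, SS; apply Int_ge0.
  apply cont_mult; apply (fam_cont D M); auto.
  intros; apply Rle_0_sqr.
Qed.

Lemma logconv k : (1 <= k)%nat -> (k + 1 <= M)%nat -> (k <= V)%nat -> 0 < aa (k - 1) ->
  aa k * aa k <= aa (k - 1) * aa (k + 1).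
Proof.
  intros H1 H2 H3 Hp.
  pose proof (CS (D (k + 1)) (D (k - 1)) ltac:(apply (fam_cont D M); auto)
               ltac:(apply (fam_cont D M); auto; lia) Hp) as H.
  fold (SS D D (k+1) (k-1)) in H. rewrite Im1 in H by auto.
  change (- aa k * (- aa k * 1) <= aa (k+1) * aa (k-1)) in H. nra.
Qed.

End L.


Lemma sq_m1 k : (-1) ^ k * (-1) ^ k = 1.
Proof. rewrite <- Rpow_mult_distr. replace (-1 * -1) with 1 by ring. apply pow1. Qed.

Lemma lemL D p m mu : (1 <= p)%nat -> (p <= m)%nat -> fam D (2 * m) ->
  (forall x, inI x -> D (2 * m)%nat x = mu * D (2 * m - 2 * p)%nat x) ->
  (forall j, (j < S m)%nat -> D j 1 = 0 /\ D j (-1) = 0) ->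
  forall x, inI x -> D 0%nat x = 0.
Proof.
  intros Hp Hpm HF Hode HV.
  destruct (classic (exists k, (k <= S m)%nat /\ aa D k = 0)) as [[k [Hk Ha]]|Hn].
  { apply (descent D (2 * m) HF k); [lia| |].
    - intros x Hx. unfold aa, SS in Ha.
      assert (Hz := Int_zero_inv (fun x => D k x * D k x) ltac:(apply cont_mult; apply (fam_cont D (2*m)); auto; lia)
                 ltac:(intros; apply Rle_0_sqr) Ha x Hx).
      nra.
    - intros j Hj; apply HV; lia. }
  assert (Hpos : forall k, (k <= S m)%nat -> 0 < aa D k).
  { intros k Hk. destruct (aa_ge0 D (2 * m) HF k ltac:(lia)) as [H|H]; auto.
    exfalso; apply Hn; exists k; auto. }
  assert (Hode2 : forall b, (b <= 2 * m)%nat -> SS D D (2 * m) b = mu * SS D D (2 * m - 2 * p) b).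
  { intros b Hb. unfold SS. rewrite <- Int_scal.
    - apply Int_ext; intros x Hx; rewrite Hode; auto; ring.
    - apply cont_mult; apply (fam_cont D (2*m)); auto; lia. }
  assert (E0 := Hode2 0%nat ltac:(lia)).
  assert (E2 := Hode2 2%nat ltac:(lia)).
  replace (2 * m - 2 * p)%nat with (2 * (m - p))%nat in E0, E2 by lia.
  rewrite (I0 D (2 * m) (S m) HF HV m) in E0 by lia.
  rewrite (I0 D (2 * m) (S m) HF HV (m - p)) in E0 by lia.
  rewrite (I2 D (2 * m) (S m) HF HV m) in E2 by lia.
  rewrite (I2 D (2 * m) (S m) HF HV (m - p)) in E2 by lia.
  rewrite !pow_add in E2. simpl in E2.
  set (s := (-1) ^ m) in *. set (s' := (-1) ^ (m - p)) in *.
  assert (Hs : s * s = 1) by apply sq_m1. assert (Hs' : s' * s' = 1) by apply sq_m1.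
  set (nu := mu * s * s').
  assert (A0 : aa D m = nu * aa D (m - p)).
  { replace (aa D m) with (s * (s * aa D m)) by (transitivity ((s*s)*aa D m); [ring| rewrite Hs; ring]).
    rewrite E0. unfold nu. ring. }
  assert (A2 : aa D (m + 1) = nu * aa D (m - p + 1)).
  { replace (s * (-1 * 1) * aa D (m + 1)) with (-(s * aa D (m+1))) in E2 by ring.
    replace (mu * (s' * (-1 * 1) * aa D (m - p + 1))) with (-(mu * (s' * aa D (m - p + 1)))) in E2 by ring.
    assert (E2' : s * aa D (m+1) = mu * (s' * aa D (m - p + 1))) by lra.
    replace (aa D (m+1)) with (s * (s * aa D (m+1))) by (transitivity ((s*s)*aa D (m+1)); [ring| rewrite Hs; ring]).
    rewrite E2'. unfold nu. ring. }
  set (r := fun k => aa D k / aa D (k - 1)).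
  assert (Hmono : forall k, (1 <= k)%nat -> (k <= m)%nat -> r k <= r (S k)).
  { intros k H1 H2. unfold r.
    pose proof (logconv D (2 * m) (S m) HF HV k H1 ltac:(lia) ltac:(lia) ltac:(apply Hpos; lia)) as L.
    replace (S k - 1)%nat with k by lia. replace (k + 1)%nat with (S k) in L by lia.
    assert (P1 := Hpos (k - 1)%nat ltac:(lia)). assert (P2 := Hpos k ltac:(lia)).
    apply (Rmult_le_reg_r (aa D (k - 1) * aa D k)); [nra|].
    replace (aa D k / aa D (k - 1) * (aa D (k - 1) * aa D k)) with (aa D k * aa D k) by (field; lra).
    replace (aa D (S k) / aa D k * (aa D (k - 1) * aa D k)) with (aa D (k - 1) * aa D (S k)) by (field; lra).
    exact L. }
  assert (Hch : forall d, (d < m)%nat -> r (m - d)%nat <= r m).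
  { intro d; induction d as [|d IH]; intros Hd.
    - replace (m - 0)%nat with m by lia; lra.
    - eapply Rle_trans; [|apply IH; lia].
      replace (m - d)%nat with (S (m - S d)) by lia. apply Hmono; lia. }
  assert (R1 : r (m + 1 - p)%nat <= r m).
  { replace (m + 1 - p)%nat with (m - (p - 1))%nat by lia. apply Hch; lia. }
  assert (R2 : r m <= r (m + 1)%nat) by (replace (m + 1)%nat with (S m) by lia; apply Hmono; lia).
  assert (Pm := Hpos m ltac:(lia)). assert (Pmp := Hpos (m - p)%nat ltac:(lia)).
  assert (Hnu : nu <> 0) by (intro Hz; rewrite Hz in A0; lra).
  assert (R3 : r (m + 1)%nat = r (m + 1 - p)%nat).
  { unfold r. replace (m + 1 - 1)%nat with m by lia. replace (m + 1 - p - 1)%nat with (m - p)%nat by lia.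
    replace (m + 1 - p)%nat with (m - p + 1)%nat by lia.
    rewrite A2, A0. field; split; lra. }
  assert (Pm1 := Hpos (m - 1)%nat ltac:(lia)). assert (Pm2 := Hpos (m + 1)%nat ltac:(lia)).
  assert (Heq : aa D (m + 1) = aa D m * aa D m / aa D (m - 1)).
  { assert (r m = r (m + 1)%nat) by lra. unfold r in H.
    replace (m + 1 - 1)%nat with m in H by lia.
    assert (H' : aa D (m+1) = (aa D (m+1) / aa D m) * aa D m) by (field; lra).
    rewrite H', <- H. field; lra. }
  set (t := aa D m / aa D (m - 1)).
  assert (Ht : 0 < t) by (unfold t; apply Rdiv_lt_0_compat; lra).
  assert (Cm1 : cont (D (m + 1)%nat)) by (apply (fam_cont D (2*m)); auto; lia).
  assert (Cmm : cont (D (m - 1)%nat)) by (apply (fam_cont D (2*m)); auto; lia).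
  assert (Iz : Int (fun x => (D (m+1)%nat x + t * D (m-1)%nat x) * (D (m+1)%nat x + t * D (m-1)%nat x)) = 0).
  { rewrite (Int_ext _ (fun x => (D (m+1)%nat x * D (m+1)%nat x + (2 * t) * (D (m+1)%nat x * D (m-1)%nat x))
                                + (t * t) * (D (m-1)%nat x * D (m-1)%nat x))) by (intros; ring).
    rewrite Int_plus, Int_plus, Int_scal, Int_scal;
      try (repeat first [apply cont_plus | apply cont_scal | apply cont_mult]; auto).
    fold (SS D D (m+1) (m+1)) (SS D D (m+1) (m-1)) (SS D D (m-1) (m-1)).
    rewrite (Im1 D (2 * m) (S m) HF HV m) by lia.
    fold (aa D (m+1)) (aa D (m-1)). rewrite Heq. unfold t. field. lra. }
  assert (Hu : forall x, inI x -> D (m+1)%nat x = - t * D (m-1)%nat x).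
  { intros x Hx. assert (Z := Int_zero_inv (fun x => (D (m+1)%nat x + t * D (m-1)%nat x) * (D (m+1)%nat x + t * D (m-1)%nat x)) ltac:(apply cont_mult; apply cont_plus; auto; apply cont_scal; auto)
                        ltac:(intros; apply Rle_0_sqr) Iz x Hx). nra. }
  set (E := fun y => D m y * D m y + t * (D (m - 1)%nat y * D (m - 1)%nat y)).
  assert (HE : forall y, inI y -> derivable_pt_lim E y 0).
  { intros y Hy. unfold E.
    assert (d1 : derivable_pt_lim (D m) y (D (m + 1)%nat y)).
    { replace (m + 1)%nat with (S m) by lia. apply (proj1 HF); auto; lia. }
    assert (d2 : derivable_pt_lim (D (m - 1)%nat) y (D m y)).
    { replace (D m y) with (D (S (m - 1)) y) by (f_equal; lia). apply (proj1 HF); auto; lia. }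
    apply (deriv_lim_eq _ _ ((D (m+1)%nat y * D m y + D m y * D (m+1)%nat y)
             + t * (D m y * D (m-1)%nat y + D (m-1)%nat y * D m y))).
    - apply (derivable_pt_lim_plus (fun y => D m y * D m y) (fun y => t * (D (m - 1)%nat y * D (m - 1)%nat y))).
      + apply (derivable_pt_lim_mult (D m) (D m)); auto.
      + apply (derivable_pt_lim_scal (fun y => D (m - 1)%nat y * D (m - 1)%nat y)).
        apply (derivable_pt_lim_mult (D (m-1)%nat) (D (m-1)%nat)); auto.
    - rewrite Hu by auto. ring. }
  assert (Hz : forall x, inI x -> D (m - 1)%nat x = 0).
  { intros x Hx. pose proof (deriv0_const E HE x Hx) as HEx. unfold E in HEx.
    destruct (HV m ltac:(lia)) as [_ Z1]. destruct (HV (m-1)%nat ltac:(lia)) as [_ Z2].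
    rewrite Z1, Z2 in HEx.
    assert (0 <= D m x * D m x) by apply Rle_0_sqr.
    assert (0 <= D (m-1)%nat x * D (m-1)%nat x) by apply Rle_0_sqr.
    assert (0 <= t * (D (m-1)%nat x * D (m-1)%nat x)) by (apply Rmult_le_pos; lra).
    assert (t * (D (m-1)%nat x * D (m-1)%nat x) = 0) by lra.
    apply Rmult_integral in H2; destruct H2 as [H2|H2]; [lra|].
    apply Rmult_integral in H2; destruct H2; auto. }
  assert (aa D (m - 1) = 0).
  { unfold aa, SS. rewrite (Int_ext _ (fun _ => 0)). apply Int_zero. intros x Hx; rewrite Hz; auto; ring. }
  lra.
Qed.

Lemma pow_m1_even k : (-1) ^ (2 * k) = 1.
Proof. rewrite pow_mult. replace ((-1)^2) with 1 by (simpl; ring). apply pow1. Qed.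

Lemma Bd_F F G a b : F a 1 = 0 -> F a (-1) = 0 -> Bd F G a b = 0.
Proof. intros H1 H2; unfold Bd; rewrite H1, H2; ring. Qed.
Lemma Bd_G F G a b : G b 1 = 0 -> G b (-1) = 0 -> Bd F G a b = 0.
Proof. intros H1 H2; unfold Bd; rewrite H1, H2; ring. Qed.

Lemma SS_ode F G MF MG a a' b mu : fam F MF -> fam G MG -> (a' <= MF)%nat -> (b <= MG)%nat ->
  (forall x, inI x -> F a x = mu * F a' x) -> SS F G a b = mu * SS F G a' b.
Proof.
  intros HF HG H1 H2 H. unfold SS. rewrite <- Int_scal.
  - apply Int_ext; intros x Hx; rewrite H; auto; ring.
  - apply cont_mult; [apply (fam_cont F MF)|apply (fam_cont G MG)]; auto.
Qed.
Lemma SS_ode2 F G MF MG a b b' mu : fam F MF -> fam G MG -> (a <= MF)%nat -> (b' <= MG)%nat ->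
  (forall x, inI x -> G b x = mu * G b' x) -> SS F G a b = mu * SS F G a b'.
Proof.
  intros HF HG H1 H2 H. unfold SS. rewrite <- Int_scal.
  - apply Int_ext; intros x Hx; rewrite H; auto; ring.
  - apply cont_mult; [apply (fam_cont F MF)|apply (fam_cont G MG)]; auto.
Qed.

Lemma P1 F G n p mu : (1 <= p)%nat -> (p <= n)%nat -> fam F (2 * n) -> fam G (2 * n + 2) ->
  (forall j, (j < n)%nat -> F j 1 = 0 /\ F j (-1) = 0) ->
  (forall j, (j < n + 1)%nat -> G j 1 = 0 /\ G j (-1) = 0) ->
  (forall x, inI x -> F (2 * n)%nat x = mu * F (2 * n - 2 * p)%nat x) ->
  (forall x, inI x -> G (2 * n + 2)%nat x = mu * G (2 * n + 2 - 2 * p)%nat x) ->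
  Bd F G n (n + 1) = 0.
Proof.
  intros Hp Hpn HF HG VF VG OF OG.
  assert (Ea := SS_ode F G _ _ (2 * n) (2 * n - 2 * p) 2 mu HF HG ltac:(lia) ltac:(lia) OF).
  assert (Eb := SS_ode2 F G _ _ 0 (2 * n + 2) (2 * n + 2 - 2 * p) mu HF HG ltac:(lia) ltac:(lia) OG).
  assert (Ec := chain F G _ _ HF HG (n - 1) (n + 1) 2 ltac:(lia) ltac:(lia)
     ltac:(intros i Hi; apply Bd_G; apply VG; lia)).
  replace (n + 1 + (n - 1))%nat with (2 * n)%nat in Ec by lia.
  replace (2 + (n - 1))%nat with (n + 1)%nat in Ec by lia.
  assert (Ed := step F G _ _ n (n + 1) HF HG ltac:(lia) ltac:(lia)).
  assert (Ee := chain F G _ _ HF HG n 0 (n + 2) ltac:(lia) ltac:(lia)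
     ltac:(intros i Hi; apply Bd_F; apply VF; lia)).
  replace (0 + n)%nat with n in Ee by lia. replace (n + 2 + n)%nat with (2 * n + 2)%nat in Ee by lia.
  assert (Ef := chain F G _ _ HF HG (2 * n - 2 * p) 0 2 ltac:(lia) ltac:(lia)
     ltac:(intros i Hi; destruct (Nat.lt_ge_cases i n);
           [apply Bd_F; apply VF; lia | apply Bd_G; apply VG; lia])).
  replace (0 + (2 * n - 2 * p))%nat with (2 * n - 2 * p)%nat in Ef by lia.
  replace (2 + (2 * n - 2 * p))%nat with (2 * n + 2 - 2 * p)%nat in Ef by lia.
  replace (2 * n - 2 * p)%nat with (2 * (n - p))%nat in Ef at 2 by lia.
  rewrite pow_m1_even in Ef.
  replace (S n) with (n + 1)%nat in Ed by lia. replace (S (n + 1)) with (n + 2)%nat in Ed by lia.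
  rewrite Ed, Ee in Ec. rewrite Ea, Ef, Rmult_1_l, <- Eb in Ec.
  assert (Hn : (-1)^n = -1 * (-1)^(n-1)) by (rewrite tech_pow_Rmult; f_equal; lia).
  rewrite Hn in Ec.
  set (s := (-1) ^ (n - 1)) in *.
  assert (Hs : s * s = 1) by apply sq_m1.
  assert (s <> 0) by (intro Hz; rewrite Hz in Hs; lra).
  assert (s * Bd F G n (n + 1) = 0).
  { replace (s * Bd F G n (n+1)) with (s * (Bd F G n (n + 1) - -1 * s * SS F G 0 (2 * n + 2)) - (s * s) * SS F G 0 (2*n+2)) by ring.
    rewrite Hs, <- Ec. ring. }
  apply Rmult_integral in H0; destruct H0; [contradiction|auto].
Qed.

Lemma P2 F G n p mu : (1 <= p)%nat -> (p <= n)%nat -> fam F (2 * n) -> fam G (2 * n + 4) ->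
  (forall j, (j < n)%nat -> F j 1 = 0 /\ F j (-1) = 0) ->
  (forall j, (j < n + 2)%nat -> G j 1 = 0 /\ G j (-1) = 0) ->
  (forall x, inI x -> F (2 * n)%nat x = mu * F (2 * n - 2 * p)%nat x) ->
  (forall x, inI x -> G (2 * n + 4)%nat x = mu * G (2 * n + 4 - 2 * p)%nat x) ->
  Bd F G n (n + 3) = Bd F G (n + 1) (n + 2).
Proof.
  intros Hp Hpn HF HG VF VG OF OG.
  assert (Ea := SS_ode F G _ _ (2 * n) (2 * n - 2 * p) 4 mu HF HG ltac:(lia) ltac:(lia) OF).
  assert (Eb := SS_ode2 F G _ _ 0 (2 * n + 4) (2 * n + 4 - 2 * p) mu HF HG ltac:(lia) ltac:(lia) OG).
  assert (Ef := chain F G _ _ HF HG (2 * n - 2 * p) 0 4 ltac:(lia) ltac:(lia)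
     ltac:(intros i Hi; destruct (Nat.lt_ge_cases i n);
           [apply Bd_F; apply VF; lia | apply Bd_G; apply VG; lia])).
  replace (0 + (2 * n - 2 * p))%nat with (2 * n - 2 * p)%nat in Ef by lia.
  replace (4 + (2 * n - 2 * p))%nat with (2 * n + 4 - 2 * p)%nat in Ef by lia.
  replace (2 * n - 2 * p)%nat with (2 * (n - p))%nat in Ef at 2 by lia.
  rewrite pow_m1_even in Ef.
  destruct (Nat.eq_dec n 1) as [E1|E1].
  - subst n. assert (p = 1%nat) by lia. subst p.
    assert (Bd F G 2 3 = 0).
    {
      apply Bd_F.
      - pose proof (OF 1 ltac:(unfold inI; lra)) as O; simpl in O; rewrite O.
        rewrite (proj1 (VF 0%nat ltac:(lia))); ring.
      - pose proof (OF (-1) ltac:(unfold inI; lra)) as O; simpl in O; rewrite O.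
        rewrite (proj2 (VF 0%nat ltac:(lia))); ring. }
    simpl (1 + 1)%nat; simpl (1 + 2)%nat; simpl (1 + 3)%nat. rewrite H.
    assert (S1 := step F G _ _ 1 4 HF HG ltac:(lia) ltac:(lia)).
    assert (S2 := step F G _ _ 0 5 HF HG ltac:(lia) ltac:(lia)).
    rewrite (Bd_F F G 0 5) in S2 by (apply VF; lia).
    simpl in Ea, Eb, Ef, S1, S2.
    rewrite S1, S2 in Ea. lra.
  - assert (Ec := chain F G _ _ HF HG (n - 2) (n + 2) 4 ltac:(lia) ltac:(lia)
       ltac:(intros i Hi; apply Bd_G; apply VG; lia)).
    replace (n + 2 + (n - 2))%nat with (2 * n)%nat in Ec by lia.
    replace (4 + (n - 2))%nat with (n + 2)%nat in Ec by lia.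
    assert (D1 := step F G _ _ (n + 1) (n + 2) HF HG ltac:(lia) ltac:(lia)).
    assert (D2 := step F G _ _ n (n + 3) HF HG ltac:(lia) ltac:(lia)).
    assert (Ee := chain F G _ _ HF HG n 0 (n + 4) ltac:(lia) ltac:(lia)
       ltac:(intros i Hi; apply Bd_F; apply VF; lia)).
    replace (0 + n)%nat with n in Ee by lia. replace (n + 4 + n)%nat with (2 * n + 4)%nat in Ee by lia.
    replace (S (n + 1)) with (n + 2)%nat in D1 by lia. replace (S (n + 2)) with (n + 3)%nat in D1 by lia.
    replace (S n) with (n + 1)%nat in D2 by lia. replace (S (n + 3)) with (n + 4)%nat in D2 by lia.
    rewrite D1, D2, Ee in Ec. rewrite Ea, Ef, Rmult_1_l, <- Eb in Ec.
    assert (Hn : (-1)^n = -1 * (-1 * (-1)^(n-2))) by (rewrite !tech_pow_Rmult; f_equal; lia).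
    rewrite Hn in Ec.
    set (s := (-1) ^ (n - 2)) in *.
    assert (Hs : s * s = 1) by apply sq_m1.
    assert (s <> 0) by (intro Hz; rewrite Hz in Hs; lra).
    assert (s * (Bd F G (n + 1) (n + 2) - Bd F G n (n + 3)) = 0).
    { replace (s * (Bd F G (n + 1) (n + 2) - Bd F G n (n + 3))) with
        (s * (Bd F G (n + 1) (n + 2) - (Bd F G n (n + 3) - -1 * (-1 * s) * SS F G 0 (2 * n + 4)))
         - (s * s) * SS F G 0 (2 * n + 4)) by ring.
      rewrite Hs, <- Ec. ring. }
    apply Rmult_integral in H0; destruct H0; [contradiction|lra].
Qed.

Lemma parity D M : fam D M -> (forall x, inI x -> D 0%nat (-x) = D 0%nat x) ->
  forall j, (j <= M)%nat -> forall x, inI x -> D j (-x) = (-1) ^ j * D j x.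
Proof.
  intros HF H0 j. induction j as [|j IH]; intros Hj x Hx.
  - simpl; rewrite H0; auto; ring.
  - assert (Hmx : inI (-x)) by (unfold inI in *; lra).
    assert (d1 : derivable_pt_lim (comp (D j) (fun y => - y)) x (D (S j) (-x) * -1)).
    { apply derivable_pt_lim_comp.
      - apply (derivable_pt_lim_opp id x 1). apply derivable_pt_lim_id.
      - apply (proj1 HF); auto; lia. }
    assert (d2 : derivable_pt_lim (fun y => (-1) ^ j * D j y) x ((-1) ^ j * D (S j) x)).
    { apply (derivable_pt_lim_scal (D j)). apply (proj1 HF); auto; lia. }
    assert (Heq : forall y, inI y -> comp (D j) (fun y => - y) y = (-1) ^ j * D j y).
    { intros y Hy; unfold comp; apply IH; [lia|auto]. }
    assert (E := deriv_unique_I _ _ x _ _ Heq Hx d1 d2).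
    simpl. rewrite Rmult_assoc, <- E. ring.
Qed.

Definition ext (F : nat -> R -> R) (n p : nat) (mu : R) : nat -> R -> R :=
  fun j => if (j <? 2 * n)%nat then F j else (fun x => mu * F (j - 2 * p)%nat x).

Section Ext.
Variables (F : nat -> R -> R) (n p : nat) (mu : R).
Hypothesis Hp : (1 <= p)%nat.
Hypothesis Hpn : (p <= n)%nat.
Hypothesis HF : fam F (2 * n).
Hypothesis OF : forall x, inI x -> F (2 * n)%nat x = mu * F (2 * n - 2 * p)%nat x.

Lemma ext_agree j x : (j <= 2 * n)%nat -> inI x -> ext F n p mu j x = F j x.
Proof.
  intros Hj Hx. unfold ext. destruct (Nat.ltb_spec j (2 * n)); auto.
  assert (j = 2 * n)%nat by lia. subst j. rewrite OF; auto.
Qed.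

Lemma ext_fam : fam (ext F n p mu) (2 * n + 2).
Proof.
  split.
  - intros j x Hj Hx. unfold ext.
    destruct (Nat.ltb_spec j (2 * n)); destruct (Nat.ltb_spec (S j) (2 * n)).
    + apply (proj1 HF); auto.
    + assert (S j = 2 * n)%nat by lia.
      apply (deriv_lim_eq _ _ (F (S j) x)). apply (proj1 HF); auto.
      rewrite H1, OF; auto.
    + lia.
    + apply (derivable_pt_lim_scal (F (j - 2 * p)%nat)).
      replace (S j - 2 * p)%nat with (S (j - 2 * p)) by lia.
      apply (proj1 HF); auto; lia.
  - unfold ext. destruct (Nat.ltb_spec (2 * n + 2) (2 * n)); [lia|].
    apply cont_scal. apply (fam_cont F (2 * n)); auto; lia.
Qed.

Lemma ext_ode x : inI x -> ext F n p mu (2 * n + 2)%nat x = mu * ext F n p mu (2 * n + 2 - 2 * p)%nat x.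
Proof.
  intros Hx. rewrite (ext_agree (2 * n + 2 - 2 * p)) by (auto; lia).
  unfold ext. destruct (Nat.ltb_spec (2 * n + 2) (2 * n)); [lia|].
  reflexivity.
Qed.
End Ext.

Lemma sign_conv k p Lam A B : (p <= k)%nat -> (-1) ^ k * A - Lam * (-1) ^ (k - p) * B = 0 ->
  A = Lam * (-1) ^ p * B.
Proof.
  intros Hk H.
  assert (Hkk : (-1) ^ k = (-1) ^ (k - p) * (-1) ^ p) by (rewrite <- pow_add; f_equal; lia).
  rewrite Hkk in H.
  set (s := (-1) ^ (k - p)) in *. set (t := (-1) ^ p) in *.
  assert (Hs : s * s = 1) by apply sq_m1. assert (Ht : t * t = 1) by apply sq_m1.
  assert (Hs0 : s <> 0) by (intro Hz; rewrite Hz in Hs; lra).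
  assert (H1 : s * (t * A - Lam * B) = 0).
  { rewrite <- H. ring. }
  apply Rmult_integral in H1; destruct H1 as [H1|H1]; [contradiction|].
  transitivity ((t * t) * A); [rewrite Ht; ring|].
  replace (t * t * A) with (t * (t * A)) by ring. replace (t * A) with (Lam * B) by lra. ring.
Qed.

Lemma from_S p k Lam : (p <= k)%nat -> S_sym p k Lam -> exists D,
  fam D (2 * k) /\ (exists x, inI x /\ D 0%nat x <> 0) /\
  (forall x, inI x -> D (2 * k)%nat x = (Lam * (-1) ^ p) * D (2 * k - 2 * p)%nat x) /\
  (forall j, (j < k)%nat -> D j 1 = 0 /\ D j (-1) = 0) /\
  (forall j, (j <= 2 * k)%nat -> forall x, inI x -> D j (-x) = (-1) ^ j * D j x).
Proof.
  intros Hk [z [[D [[H0 [H1 H2]] [[x0 [Hx0 Hz]] [Hode Hbc]]]] Hev]].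
  assert (HF : fam D (2 * k)) by (split; [intros j x Hj _; apply H1; auto | intros x Hx; apply H2; auto]).
  exists D. split; [auto|]. split; [exists x0; rewrite H0; split; auto|].
  split; [intros x Hx; apply (sign_conv k p); auto; apply Hode; auto|].
  split; [intros j Hj; destruct (Hbc j Hj); split; auto|].
  apply (parity D (2 * k)); auto. intros x Hx; rewrite !H0; apply Hev; auto.
Qed.

Lemma par_m1 D M j : (forall j, (j <= M)%nat -> forall x, inI x -> D j (-x) = (-1) ^ j * D j x) ->
  (j <= M)%nat -> D j (-1) = (-1) ^ j * D j 1.
Proof.
  intros H Hj. assert (E := H j Hj 1 ltac:(unfold inI; lra)).
  replace (- (1)) with (-1) in E by ring. exact E.
Qed.

Lemma Fn_ne D p m mu : (1 <= p)%nat -> (p <= m)%nat -> fam D (2 * m) ->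
  (forall x, inI x -> D (2 * m)%nat x = mu * D (2 * m - 2 * p)%nat x) ->
  (forall j, (j < m)%nat -> D j 1 = 0 /\ D j (-1) = 0) ->
  D m (-1) = (-1) ^ m * D m 1 ->
  (exists x, inI x /\ D 0%nat x <> 0) -> D m 1 <> 0.
Proof.
  intros Hp Hpm HF OD VD Pm [x0 [Hx0 Hn]] Hz. apply Hn.
  apply (lemL D p m mu); auto.
  intros j Hj. destruct (Nat.lt_ge_cases j m); auto.
  assert (j = m) by lia; subst j. split; auto. rewrite Pm, Hz; ring.
Qed.

Lemma pm_odd a b k : (a + b = 2 * k + 1)%nat -> (-1) ^ a * (-1) ^ b = -1.
Proof. intros H. rewrite <- pow_add, H, pow_add, pow_m1_even. simpl; ring. Qed.

Lemma Bd_odd F G a b k : F a (-1) = (-1) ^ a * F a 1 -> G b (-1) = (-1) ^ b * G b 1 ->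
  (a + b = 2 * k + 1)%nat -> Bd F G a b = 2 * (F a 1 * G b 1).
Proof.
  intros H1 H2 H3. unfold Bd. rewrite H1, H2.
  replace ((-1) ^ a * F a 1 * ((-1) ^ b * G b 1)) with (((-1) ^ a * (-1) ^ b) * (F a 1 * G b 1)) by ring.
  rewrite (pm_odd a b k H3). ring.
Qed.

Theorem mainTheorem1 (p n : nat) (hp : (1 <= p)%nat) (hn : (p <= n)%nat) :
  forall Lam : R,
    ~ (S_sym p n Lam /\ S_sym p (n + 1) Lam) /\
    ~ (S_sym p n Lam /\ S_sym p (n + 2) Lam).
Proof.
  intros Lam. split.
  - intros [S1 S2].
    destruct (from_S p n Lam ltac:(lia) S1) as [F [HF [NF [OF [VF PF]]]]].
    destruct (from_S p (n + 1) Lam ltac:(lia) S2) as [G [HG [NG [OG [VG PG]]]]].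
    set (mu := Lam * (-1) ^ p) in *.
    assert (Fn : F n 1 <> 0) by (apply (Fn_ne F p n mu); auto; apply (par_m1 F (2 * n)); auto; lia).
    assert (Gn : G (n + 1)%nat 1 <> 0)
      by (apply (Fn_ne G p (n + 1) mu); auto; try lia; apply (par_m1 G (2 * (n + 1))); auto; lia).
    replace (2 * (n + 1))%nat with (2 * n + 2)%nat in HG, OG, PG by lia.
    assert (B := P1 F G n p mu hp hn HF HG VF VG OF OG).
    rewrite (Bd_odd F G n (n + 1) n) in B; try lia.
    + assert (F n 1 * G (n + 1)%nat 1 <> 0) by (apply Rmult_integral_contrapositive; auto). lra.
    + apply (par_m1 F (2 * n)); auto; lia.
    + apply (par_m1 G (2 * n + 2)); auto; lia.
  - intros [S1 S2].
    destruct (from_S p n Lam ltac:(lia) S1) as [F [HF [NF [OF [VF PF]]]]].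
    destruct (from_S p (n + 2) Lam ltac:(lia) S2) as [G [HG [NG [OG [VG PG]]]]].
    set (mu := Lam * (-1) ^ p) in *.
    assert (Fn : F n 1 <> 0) by (apply (Fn_ne F p n mu); auto; apply (par_m1 F (2 * n)); auto; lia).
    assert (HG4 : fam G (2 * n + 4)) by (replace (2 * n + 4)%nat with (2 * (n + 2))%nat by lia; auto).
    assert (OG4 : forall x, inI x -> G (2 * n + 4)%nat x = mu * G (2 * n + 4 - 2 * p)%nat x).
    { intros x Hx. replace (2 * n + 4)%nat with (2 * (n + 2))%nat by lia. apply OG; auto. }
    assert (PG4 : forall j, (j <= 2 * n + 4)%nat -> forall x, inI x -> G j (-x) = (-1) ^ j * G j x).
    { intros j Hj; apply PG; lia. }
    assert (B := P2 F G n p mu hp hn HF HG4 VF VG OF OG4).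
    rewrite (Bd_odd F G n (n + 3) (n + 1)) in B; try lia;
      try (apply (par_m1 F (2 * n)); auto; lia); try (apply (par_m1 G (2 * n + 4)); auto; lia).
    rewrite (Bd_odd F G (n + 1) (n + 2) (n + 1)) in B; try lia;
      try (apply (par_m1 F (2 * n)); auto; lia); try (apply (par_m1 G (2 * n + 4)); auto; lia).
    assert (Bid : F n 1 * G (n + 3)%nat 1 = F (n + 1)%nat 1 * G (n + 2)%nat 1) by lra.
    set (c := - G (n + 2)%nat 1 / F n 1).
    set (Fe := ext F n p mu).
    set (K := fun j x => G (S (S j)) x + c * Fe j x).
    assert (HK : fam K (2 * (n + 1))).
    { replace (2 * (n + 1))%nat with (2 * n + 2)%nat by lia.
      apply fam_lin. apply fam_shift2. replace (2 * n + 2 + 2)%nat with (2 * n + 4)%nat by lia; auto.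
      apply ext_fam; auto. }
    assert (Fag : forall j x, (j <= 2 * n)%nat -> inI x -> Fe j x = F j x).
    { intros j x Hj Hx; apply ext_agree; auto. }
    assert (OK : forall x, inI x -> K (2 * (n + 1))%nat x = mu * K (2 * (n + 1) - 2 * p)%nat x).
    { intros x Hx. unfold K.
      replace (S (S (2 * (n + 1)))) with (2 * n + 4)%nat by lia.
      replace (S (S (2 * (n + 1) - 2 * p))) with (2 * n + 4 - 2 * p)%nat by lia.
      replace (2 * (n + 1))%nat with (2 * n + 2)%nat by lia.
      rewrite OG4 by auto. unfold Fe. rewrite ext_ode by auto. ring. }
    assert (P1' : F n (-1) = (-1) ^ n * F n 1) by (apply (par_m1 F (2 * n)); auto; lia).
    assert (P2' : F (n + 1)%nat (-1) = (-1) ^ (n + 1) * F (n + 1)%nat 1) by (apply (par_m1 F (2 * n)); auto; lia).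
    assert (P3' : G (n + 2)%nat (-1) = (-1) ^ (n + 2) * G (n + 2)%nat 1) by (apply (par_m1 G (2 * n + 4)); auto; lia).
    assert (P4' : G (n + 3)%nat (-1) = (-1) ^ (n + 3) * G (n + 3)%nat 1) by (apply (par_m1 G (2 * n + 4)); auto; lia).
    assert (S2e : (-1) ^ (n + 2) = (-1) ^ n) by (rewrite pow_add; simpl; ring).
    assert (S3e : (-1) ^ (n + 3) = (-1) ^ (n + 1)) by (rewrite !pow_add; simpl; ring).
    assert (VK : forall j, (j < S (n + 1))%nat -> K j 1 = 0 /\ K j (-1) = 0).
    { intros j Hj. unfold K.
      assert (I1 : inI 1) by (unfold inI; lra). assert (Im : inI (-1)) by (unfold inI; lra).
      destruct (Nat.lt_ge_cases j n) as [Hjn|Hjn].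
      - rewrite !Fag by (auto; lia).
        destruct (VF j Hjn) as [-> ->]. destruct (VG (S (S j)) ltac:(lia)) as [-> ->]. split; ring.
      - destruct (Nat.eq_dec j n) as [->|Hjn'].
        + rewrite !Fag by (auto; lia).
          replace (S (S n)) with (n + 2)%nat by lia. rewrite P1', P3', S2e. unfold c.
          split; field; auto.
        + assert (j = n + 1)%nat by lia. subst j.
          rewrite !Fag by (auto; lia).
          replace (S (S (n + 1))) with (n + 3)%nat by lia. rewrite P2', P4', S3e. unfold c.
          split.
          * replace (G (n + 3)%nat 1 + - G (n + 2)%nat 1 / F n 1 * F (n + 1)%nat 1)
              with ((F n 1 * G (n + 3)%nat 1 - F (n + 1)%nat 1 * G (n + 2)%nat 1) / F n 1) by (field; auto).
            rewrite Bid. field; auto.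
          * replace ((-1) ^ (n + 1) * G (n + 3)%nat 1 + - G (n + 2)%nat 1 / F n 1 * ((-1) ^ (n + 1) * F (n + 1)%nat 1))
              with ((-1) ^ (n + 1) * (F n 1 * G (n + 3)%nat 1 - F (n + 1)%nat 1 * G (n + 2)%nat 1) / F n 1) by (field; auto).
            rewrite Bid. field; auto. }
    assert (K0 := lemL K p (n + 1) mu hp ltac:(lia) HK OK VK).
    assert (Kz := fam_zero_prop K _ HK K0).
    assert (OG2 : forall x, inI x -> G (2 * (n + 1))%nat x = mu * G (2 * (n + 1) - 2 * p)%nat x).
    { intros x Hx.
      assert (Z1 := Kz (2 * n)%nat ltac:(lia) x Hx). assert (Z2 := Kz (2 * n - 2 * p)%nat ltac:(lia) x Hx).
      unfold K in Z1, Z2. rewrite Fag in Z1, Z2 by (auto; lia).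
      replace (S (S (2 * n))) with (2 * (n + 1))%nat in Z1 by lia.
      replace (S (S (2 * n - 2 * p))) with (2 * (n + 1) - 2 * p)%nat in Z2 by lia.
      rewrite OF in Z1 by auto.
      replace (G (2 * (n + 1))%nat x) with (- c * (mu * F (2 * n - 2 * p)%nat x)) by lra.
      replace (G (2 * (n + 1) - 2 * p)%nat x) with (- c * F (2 * n - 2 * p)%nat x) by lra. ring. }
    assert (HG2 : fam G (2 * (n + 1))) by (apply (fam_le G (2 * (n + 2))); auto; lia).
    destruct NG as [x0 [Hx0 Hn0]]. apply Hn0.
    apply (lemL G p (n + 1) mu hp ltac:(lia) HG2 OG2); auto.
    intros j Hj; apply VG; lia.
Qed.
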